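(* Let $\Omega$ be a finite set and $f:2^{\Omega}\to\mathbb{R}$ increasing with $f(\emptyset)=0$. Then the multilinear extension $F^M$ of $f$ is $\left(|\Omega|(|\Omega|^{3/2}-1)2^{|\Omega|-4}D[f]\right)$-up-concave.
   Context: Multilinear extension: $F^M(x)=\sum_{\mathcal{S}\subseteq\Omega}f(\mathcal{S})\prod_{i\in\mathcal{S}}x_i\prod_{i\notin\mathcal{S}}(1-x_i)$ for $x\in[0,1]^{|\Omega|}$. $D[f]=\max\{f(\mathcal{A}\cup\mathcal{B}\cup\{s\})-f(\mathcal{A}\cup\mathcal{B})-f(\mathcal{A}\cup\{s\})+f(\mathcal{A}):\mathcal{A},\mathcal{B}\subseteq\Omega,s\in\Omega,|\mathcal{A}|\le|\Omega|-1\}$. $F:[0,1]^n\to\mathbb{R}$ is $\epsilon$-up-concave ($\epsilon\ge0$) if for every $u\in\mathbb{R}^n_{+}$, $x\in[0,1]^n$, the function $G_{x,u}(t)=F(tu+x)$ satisfies $G_{x,u}(\lambda t_1+(1-\lambda)t_2)\ge\lambda G_{x,u}(t_1)+(1-\lambda)G_{x,u}(t_2)-\epsilon$ for all $\lambda\in[0,1]$ and $t_1,t_2\in\mathbb{R}$ such that $t_1u+x$, $t_2u+x$, and $x+\lambda t_1u+(1-\lambda)t_2u$ lie in $[0,1]^n$. *)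

(* Defs.v *)
From mathcomp Require Import all_boot all_order all_algebra.
From mathcomp Require Import reals.
Set Implicit Arguments. Unset Strict Implicit. Unset Printing Implicit Defensive.
Import Order.TTheory GRing.Theory Num.Theory.
Local Open Scope ring_scope.

Section Defs.
Variables (R : realType) (Omega : finType).

Definition increasing_set_fun (f : {set Omega} -> R) : Prop :=
  forall A B : {set Omega}, A \subset B -> f A <= f B.

Definition multilinear_ext (f : {set Omega} -> R) (x : Omega -> R) : R :=
  \sum_(S : {set Omega})
     f S * (\prod_(i in S) x i) * (\prod_(i in ~: S) (1 - x i)).

(* D[f] : maximum over A, B subsets of Omega, s in Omega, |A| <= |Omega| - 1.
   The neutral element 0 is harmless: the term with B = set0 equals 0, so the
   max is >= 0 whenever the index set is nonempty. *)
Definition Dmax (f : {set Omega} -> R) : R :=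
  \big[Num.max/0]_(A : {set Omega} | (#|A| <= #|Omega| - 1)%N)
   \big[Num.max/0]_(B : {set Omega})
    \big[Num.max/0]_(s : Omega)
      (f (A :|: B :|: [set s]) - f (A :|: B) - f (A :|: [set s]) + f A).

Definition in_cube (x : Omega -> R) : Prop := forall i, 0 <= x i <= 1.

Definition up_concave (eps : R) (F : (Omega -> R) -> R) : Prop :=
  forall (u x : Omega -> R), (forall i, 0 <= u i) -> in_cube x ->
  let G := fun t : R => F (fun i => t * u i + x i) in
  forall (lam t1 t2 : R), 0 <= lam <= 1 ->
    in_cube (fun i => t1 * u i + x i) ->
    in_cube (fun i => t2 * u i + x i) ->
    in_cube (fun i => x i + lam * t1 * u i + (1 - lam) * t2 * u i) ->
    G (lam * t1 + (1 - lam) * t2) >= lam * G t1 + (1 - lam) * G t2 - eps.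
End Defs.

(* Main.v *)
Require Import Defs.
From mathcomp Require Import all_boot all_order all_algebra.
From mathcomp Require Import reals ring lra.
Set Implicit Arguments. Unset Strict Implicit. Unset Printing Implicit Defensive.
Import Order.TTheory GRing.Theory Num.Theory.
Local Open Scope ring_scope.

Definition upd (R : realType) (Omega : finType) (x : Omega -> R) i c :=
  fun k => if k == i then c else x k.

Definition rr (R : realType) (Omega : finType) (i : Omega) (S : {set Omega})
  (x : Omega -> R) :=
  \prod_(k in S) x k * \prod_(k in ~: (i |: S)) (1 - x k).

Definition dlt (R : realType) (Omega : finType) (i : Omega)
  (f : {set Omega} -> R) := fun T => f (i |: T) - f (T :\ i).

Definition A0 (R : realType) (Omega : finType) (f : {set Omega} -> R) (x : Omega -> R) (i : Omega) :=
  \sum_(S : {set Omega} | i \notin S) rr i S x * f S.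
Definition A1 (R : realType) (Omega : finType) (f : {set Omega} -> R) (x : Omega -> R) (i : Omega) :=
  \sum_(S : {set Omega} | i \notin S) rr i S x * f (i |: S).

Lemma split_sum (R : realType) (Omega : finType) (phi : {set Omega} -> R) (i : Omega) :
  \sum_(S : {set Omega}) phi S = \sum_(S : {set Omega} | i \notin S) (phi S + phi (i |: S)).
Proof.
rewrite (bigID [pred S : {set Omega} | i \in S]) /= addrC big_split /=; congr (_ + _).
rewrite (reindex_onto (fun S => i |: S) (fun S => S :\ i)) /=; last first.
  by move=> S iS; rewrite setD1K.
apply: eq_bigl => S; rewrite setU11 /=.
case: (boolP (i \in S)) => iS.
  apply/negbTE/eqP => h; move: iS; rewrite -h !inE eqxx //.
by rewrite setU1K // eqxx.
Qed.

Lemma w_notin (R : realType) (Omega : finType) (x : Omega -> R) (i : Omega) (S : {set Omega}) :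
  i \notin S ->
  \prod_(k in S) x k * \prod_(k in ~: S) (1 - x k) = (1 - x i) * rr i S x.
Proof.
move=> iS; rewrite /rr [\prod_(k in ~: S) _](bigD1 i) /=; last by rewrite inE.
rewrite mulrCA; congr (_ * (_ * _)); apply: eq_bigl => k.
by rewrite !inE negb_or andbC.
Qed.

Lemma w_in (R : realType) (Omega : finType) (x : Omega -> R) (i : Omega) (S : {set Omega}) :
  i \notin S ->
  \prod_(k in i |: S) x k * \prod_(k in ~: (i |: S)) (1 - x k) = x i * rr i S x.
Proof. by move=> iS; rewrite big_setU1 //= /rr mulrA. Qed.

Lemma rr_upd (R : realType) (Omega : finType) (x : Omega -> R) (i : Omega) (S : {set Omega}) (c : R) :
  i \notin S -> rr i S (upd x i c) = rr i S x.
Proof.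
move=> iS; rewrite /rr; congr (_ * _); apply: eq_bigr => k; rewrite /upd.
  by case: eqP => // ->; rewrite (negbTE iS).
by rewrite !inE negb_or; case: eqP.
Qed.

Lemma F_dec (R : realType) (Omega : finType) (f : {set Omega} -> R) (x : Omega -> R) (i : Omega) :
  multilinear_ext f x =
  \sum_(S : {set Omega} | i \notin S) rr i S x * ((1 - x i) * f S + x i * f (i |: S)).
Proof.
rewrite /multilinear_ext (split_sum _ i); apply: eq_bigr => S iS.
rewrite -!mulrA (@w_notin _ _ x i S iS) (@w_in _ _ x i S iS) /rr; ring.
Qed.

Lemma F_at (R : realType) (Omega : finType) (f : {set Omega} -> R) (x : Omega -> R) (i : Omega) :
  multilinear_ext f x = (1 - x i) * A0 f x i + x i * A1 f x i.
Proof.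
rewrite (F_dec _ _ i) /A0 /A1 !mulr_sumr -big_split; apply: eq_bigr => S iS /=; ring.
Qed.

Lemma A0_upd (R : realType) (Omega : finType) (f : {set Omega} -> R) (x : Omega -> R) (i : Omega) (c : R) :
  A0 f (upd x i c) i = A0 f x i.
Proof. by apply: eq_bigr => S iS; rewrite rr_upd. Qed.

Lemma A1_upd (R : realType) (Omega : finType) (f : {set Omega} -> R) (x : Omega -> R) (i : Omega) (c : R) :
  A1 f (upd x i c) i = A1 f x i.
Proof. by apply: eq_bigr => S iS; rewrite rr_upd. Qed.

Lemma F_upd (R : realType) (Omega : finType) (f : {set Omega} -> R) (x : Omega -> R) (i : Omega) (c : R) :
  multilinear_ext f (upd x i c) = (1 - c) * A0 f x i + c * A1 f x i.
Proof. by rewrite (F_at _ _ i) A0_upd A1_upd /upd eqxx. Qed.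

Lemma setD1_notin (Omega : finType) (i : Omega) (S : {set Omega}) : i \notin S -> S :\ i = S.
Proof.
move=> iS; apply/setP => k; rewrite !inE; case: eqP => // ->.
by rewrite (negbTE iS).
Qed.

Lemma F_dlt (R : realType) (Omega : finType) (f : {set Omega} -> R) (x : Omega -> R) (i : Omega) :
  multilinear_ext (dlt i f) x = A1 f x i - A0 f x i.
Proof.
rewrite (F_dec _ _ i) /A0 /A1 -sumrB; apply: eq_bigr => S iS.
rewrite /dlt setUA setUid setU1K // setD1_notin //; ring.
Qed.

Lemma F_diff (R : realType) (Omega : finType) (f : {set Omega} -> R) (x : Omega -> R) (i : Omega) (a b : R) :
  multilinear_ext f (upd x i b) - multilinear_ext f (upd x i a) =
  (b - a) * multilinear_ext (dlt i f) x.
Proof. rewrite !F_upd F_dlt; ring. Qed.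

Lemma F_dlt_upd (R : realType) (Omega : finType) (f : {set Omega} -> R) (x : Omega -> R) (i : Omega) (c : R) :
  multilinear_ext (dlt i f) (upd x i c) = multilinear_ext (dlt i f) x.
Proof. by rewrite !F_dlt A0_upd A1_upd. Qed.

Lemma F_ext (R : realType) (Omega : finType) (f : {set Omega} -> R) (x y : Omega -> R) :
  (forall k, x k = y k) -> multilinear_ext f x = multilinear_ext f y.
Proof.
move=> h; apply: eq_bigr => S _.
by congr (_ * _ * _); apply: eq_bigr => k _; rewrite h.
Qed.

Lemma F_self (R : realType) (Omega : finType) (f : {set Omega} -> R) (x : Omega -> R) (i : Omega) :
  multilinear_ext f x = multilinear_ext f (upd x i (x i)).
Proof. by apply: F_ext => k; rewrite /upd; case: eqP => // ->. Qed.

Lemma w_sum (R : realType) (Omega : finType) (x : Omega -> R) :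
  \sum_(S : {set Omega}) (\prod_(k in S) x k * \prod_(k in ~: S) (1 - x k)) = 1.
Proof.
have := @bigA_distr R 0 1 *%R +%R Omega (fun k => x k) (fun k => 1 - x k).
have -> : \prod_k (x k + (1 - x k)) = 1.
  by rewrite (eq_bigr (fun _ => 1)) ?big1 // => k _; rewrite addrC subrK.
move=> h; rewrite [in RHS]h; apply: eq_bigr => S _.
symmetry; rewrite (bigID [pred k | k \in S]) /=; congr (_ * _).
  by apply: eq_bigr => k ->.
by apply: eq_big => k; rewrite ?inE // => /negbTE ->.
Qed.

Lemma F_le (R : realType) (Omega : finType) (f : {set Omega} -> R) (x : Omega -> R) (c : R) :
  in_cube x -> (forall S, f S <= c) -> multilinear_ext f x <= c.
Proof.
move=> hx hf; rewrite /multilinear_ext.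
apply: (@le_trans _ _ (\sum_(S : {set Omega})
   c * (\prod_(k in S) x k * \prod_(k in ~: S) (1 - x k)))).
  apply: ler_sum => S _; rewrite -mulrA; apply: ler_wpM2r => //.
  apply: mulr_ge0; apply: prodr_ge0 => k _; have := hx k; lra.
by rewrite -mulr_sumr w_sum mulr1.
Qed.

Lemma Dmax_ge0 (R : realType) (Omega : finType) (f : {set Omega} -> R) :
  0 <= Dmax f.
Proof. exact: bigmax_ge_id. Qed.

Lemma dd_le (R : realType) (Omega : finType) (f : {set Omega} -> R)
  (i j : Omega) (S : {set Omega}) :
  i != j -> dlt j (dlt i f) S <= Dmax f.
Proof.
move=> ij.
set A := (S :\ j) :\ i.
have e1 : i |: (j |: S) = A :|: [set i] :|: [set j].
  apply/setP => k; rewrite /A !inE.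
  case: (eqVneq k i) => ki; case: (eqVneq k j) => kj;
    rewrite ?orbT ?orbF ?andbT ?andbF ?orbT ?orbF //=;
    try by (move: ij; rewrite -ki -kj eqxx).
have e2 : (j |: S) :\ i = A :|: [set j].
  apply/setP => k; rewrite /A !inE.
  case: (eqVneq k i) => ki; case: (eqVneq k j) => kj;
    rewrite ?orbT ?orbF ?andbT ?andbF ?orbT ?orbF //=;
    try by (move: ij; rewrite -ki -kj eqxx).
have e3 : i |: (S :\ j) = A :|: [set i].
  apply/setP => k; rewrite /A !inE.
  case: (eqVneq k i) => ki; case: (eqVneq k j) => kj;
    rewrite ?orbT ?orbF ?andbT ?andbF ?orbT ?orbF //=;
    try by (move: ij; rewrite -ki -kj eqxx).
have hA : (#|A| <= #|Omega| - 1)%N.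
  rewrite subn1 -(cardsC1 i); apply: subset_leq_card; apply/subsetP => k.
  by rewrite /A !inE => /andP[].
rewrite /dlt e1 e2 e3 -/A /Dmax.
apply: le_trans (le_bigmax_cond 0 _ hA).
apply: le_trans (le_bigmax 0 _ [set i]).
apply: le_trans (le_bigmax 0 _ j) => /=.
lra.
Qed.

Lemma cube_upd (R : realType) (Omega : finType) (x : Omega -> R) (i : Omega) (c : R) :
  in_cube x -> 0 <= c <= 1 -> in_cube (upd x i c).
Proof. by move=> hx hc k; rewrite /upd; case: eqP. Qed.

Lemma mono (R : realType) (Omega : finType) (g : {set Omega} -> R) (D : R) (n : nat) :
  forall K : {set Omega}, #|K| = n -> 0 <= D ->
  (forall j, j \in K -> forall S, dlt j g S <= D) ->
  forall y z : Omega -> R, in_cube y -> in_cube z -> (forall k, y k <= z k) ->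
  (forall k, k \notin K -> y k = z k) ->
  multilinear_ext g z - multilinear_ext g y <= D * n%:R.
Proof.
elim: n => [|n IH] K hK hD hg y z hy hz hyz hout.
  have K0 := cards0_eq hK.
  rewrite (@F_ext _ _ g z y) ?subrr ?mulr0 // => k.
  by rewrite hout // K0 inE.
have /set0Pn [j jK] : K != set0.
  by apply/eqP => K0; rewrite K0 cards0 in hK.
set z' := upd z j (y j).
have hz' : in_cube z' by apply: cube_upd => //; exact: hy.
have h1 : multilinear_ext g z' - multilinear_ext g y <= D * n%:R.
  apply: (IH (K :\ j)) => //.
  - by rewrite (cardsD1 j K) jK add1n in hK; case: hK.
  - by move=> j'; rewrite !inE => /andP [_ ?]; exact: hg.
  - by move=> k; rewrite /z' /upd; case: eqP => [->|_] //; exact: hyz.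
  - move=> k; rewrite !inE negb_and negbK /z' /upd => /orP [/eqP ->|kK].
      by rewrite eqxx.
    by case: eqP => [->|_] //; exact: hout.
have h2 : multilinear_ext g z - multilinear_ext g z' <= D.
  rewrite {1}(F_self g z j) /z' F_diff.
  have := F_le hz (hg j jK).
  have := hy j; have := hz j; have := hyz j.
  move=> a /andP [b c] /andP [d e]; nra.
rewrite -addn1 natrD mulrDr mulr1; lra.
Qed.

Lemma defect (R : realType) (Omega : finType) (f : {set Omega} -> R) (D lam : R) (n : nat) :
  forall K : {set Omega}, #|K| = n -> 0 <= D -> 0 <= lam <= 1 ->
  (forall i j, i != j -> forall S, dlt j (dlt i f) S <= D) ->
  forall y z : Omega -> R, in_cube y -> in_cube z -> (forall k, y k <= z k) ->
  (forall k, k \notin K -> y k = z k) ->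
  lam * multilinear_ext f y + (1 - lam) * multilinear_ext f z
   - multilinear_ext f (fun k => lam * y k + (1 - lam) * z k)
  <= D * (n%:R * (n%:R - 1)) / 8.
Proof.
elim: n => [|n IH] K hK hD hlam hf y z hy hz hyz hout.
  have K0 := cards0_eq hK.
  have e k : z k = y k by rewrite hout // K0 inE.
  rewrite (@F_ext _ _ f z y) // (@F_ext _ _ f _ y); last first.
    by move=> k; rewrite e; ring.
  rewrite mul0r mulr0 mul0r; lra.
have /set0Pn [i iK] : K != set0.
  by apply/eqP => K0; rewrite K0 cards0 in hK.
move: hlam => /andP [hl0 hl1].
set m := fun k => lam * y k + (1 - lam) * z k.
set y' := upd y i (m i).
set z' := upd z i (m i).
have hm : 0 <= m i <= 1.
  have := hy i; have := hz i; move=> /andP [a b] /andP [c d].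
  have h1 : 0 <= lam * (1 - y i) by apply: mulr_ge0; lra.
  have h2 : 0 <= (1 - lam) * (1 - z i) by apply: mulr_ge0; lra.
  have h3 : 0 <= lam * y i by apply: mulr_ge0; lra.
  have h4 : 0 <= (1 - lam) * z i by apply: mulr_ge0; lra.
  rewrite /m; apply/andP; split; lra.
have hy' : in_cube y' by exact: cube_upd.
have hz' : in_cube z' by exact: cube_upd.
have hK' : #|K :\ i| = n.
  by rewrite (cardsD1 i K) iK add1n in hK; case: hK.
have IH' := IH (K :\ i) hK' hD (introT andP (conj hl0 hl1)) hf y' z' hy' hz'.
have hyz' : forall k, y' k <= z' k.
  by move=> k; rewrite /y' /z' /upd; case: eqP => _ //; exact: hyz.
have hout' : forall k, k \notin K :\ i -> y' k = z' k.
  move=> k; rewrite !inE negb_and negbK /y' /z' /upd => /orP [/eqP ->|kK].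
    by rewrite eqxx.
  by case: eqP => // _; exact: hout.
have {}IH' := IH' hyz' hout'.
have em : multilinear_ext f (fun k => lam * y' k + (1 - lam) * z' k)
          = multilinear_ext f m.
  apply: F_ext => k; rewrite /y' /z' /m /upd; case: eqP => [->|_] //; ring.
rewrite em in IH'.
have ey : multilinear_ext f y - multilinear_ext f y' =
          (y i - m i) * multilinear_ext (dlt i f) y'.
  by rewrite {1}(F_self f y i) F_diff /y' F_dlt_upd.
have ez : multilinear_ext f z - multilinear_ext f z' =
          (z i - m i) * multilinear_ext (dlt i f) z'.
  by rewrite {1}(F_self f z i) F_diff /z' F_dlt_upd.
have hmono : multilinear_ext (dlt i f) z' - multilinear_ext (dlt i f) y'
             <= D * n%:R.
  apply: (mono hK') => //.
  by move=> j; rewrite !inE => /andP [ji _] S; apply: hf; rewrite eq_sym.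
set Py := multilinear_ext (dlt i f) y' in ey hmono.
set Pz := multilinear_ext (dlt i f) z' in ez hmono.
set q := lam * (1 - lam) * (z i - y i).
have hq0 : 0 <= q.
  by rewrite /q; apply: mulr_ge0; [apply: mulr_ge0; lra | have := hyz i; lra].
have hq1 : q <= 1 / 4.
  have := hy i; have := hz i; have := hyz i.
  move=> a /andP [b c] /andP [d e].
  have p0 : 0 <= lam * (1 - lam) by apply: mulr_ge0; lra.
  have p1 : lam * (1 - lam) <= 1 / 4.
    have := sqr_ge0 (lam - 1 / 2); rewrite expr2 => s; nra.
  have p2 : q <= lam * (1 - lam) * 1 by apply: ler_wpM2l => //; lra.
  lra.
have hDn : 0 <= D * n%:R by apply: mulr_ge0.
have k1 : q * (Pz - Py) <= q * (D * n%:R) by apply: ler_wpM2l.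
have k2 : q * (D * n%:R) <= 1 / 4 * (D * n%:R) by apply: ler_wpM2r.
have key : lam * multilinear_ext f y + (1 - lam) * multilinear_ext f z
   - multilinear_ext f m =
   (lam * multilinear_ext f y' + (1 - lam) * multilinear_ext f z'
   - multilinear_ext f m) + q * (Pz - Py).
  have -> : multilinear_ext f y = multilinear_ext f y' + (y i - m i) * Py by lra.
  have -> : multilinear_ext f z = multilinear_ext f z' + (z i - m i) * Pz by lra.
  rewrite /q /m; ring.
rewrite -/m key.
have hE : D * ((n.+1)%:R * ((n.+1)%:R - 1)) / 8 =
         D * (n%:R * (n%:R - 1)) / 8 + 1 / 4 * (D * n%:R).
  by rewrite -addn1 natrD; field.
rewrite hE; lra.
Qed.

Lemma final_bound (R : realType) (n : nat) (D : R) : 0 <= D ->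
  D * (n%:R * (n%:R - 1)) / 8 <=
  (n%:R * (n%:R * Num.sqrt (n%:R) - 1) * (2 : R) ^ (n%:Z - 4)) * D.
Proof.
move=> hD.
case: n => [|n].
  by rewrite !mul0r mulr0 mul0r.
set N : R := (n.+1)%:R.
have hN : 1 <= N by rewrite /N ler1n.
set s := Num.sqrt N.
have s0 : 0 <= s := sqrtr_ge0 N.
have s2 : s ^+ 2 = N by rewrite sqr_sqrtr //; lra.
have s1 : 1 <= s by rewrite expr2 in s2; nra.
set p : R := (2 : R) ^ (n.+1%:Z - 4).
have hp : p * 16 = 2 ^+ n.+1.
  rewrite /p.
  have -> : (16 : R) = 2 ^ (4 : int).
    by change ((2:R) ^ (4 : int)) with ((2:R) ^+ 4); rewrite !exprS expr0; ring.
  rewrite -expfzDr; last by rewrite pnatr_eq0.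
  have e : (n.+1%:Z - 4 + 4 : int) = n.+1%:Z by rewrite subrK.
  by rewrite e.
have h2 : 2 <= (2 : R) ^+ n.+1.
  rewrite exprS; have := exprn_ege1 n (ler1n R 2); lra.
have hp8 : 1 / 8 <= p by lra.
have hNs : N <= N * s by nra.
have hA : 0 <= N * s - 1 - (N - 1) by lra.
have hB : (N - 1) / 8 <= (N * s - 1) * p.
  have h1 : (N - 1) * (1 / 8) <= (N - 1) * p by apply: ler_wpM2l; lra.
  have h2' : (N - 1) * p <= (N * s - 1) * p by apply: ler_wpM2r; lra.
  lra.
have hND : 0 <= N * D by apply: mulr_ge0; lra.
have := ler_wpM2l hND hB.
have -> : N * D * ((N - 1) / 8) = D * (N * (N - 1)) / 8 by ring.
have -> : N * D * ((N * s - 1) * p) = N * (N * s - 1) * p * D by ring.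
done.
Qed.

Theorem mainTheorem8 (R : realType) (Omega : finType) (f : {set Omega} -> R) :
  increasing_set_fun f -> f set0 = 0 ->
  up_concave
    ((#|Omega|%:R * (#|Omega|%:R * Num.sqrt (#|Omega|%:R) - 1)
       * (2 : R) ^ (#|Omega|%:Z - 4)) * Dmax f)
    (multilinear_ext f).
Proof.
move=> _ _ u x hu hx G lam t1 t2 hlam c1 c2 _.
rewrite /G.
have hD := Dmax_ge0 f.
have hff : forall i j, i != j -> forall S, dlt j (dlt i f) S <= Dmax f.
  by move=> i j ij S; apply: dd_le.
have hb := final_bound #|Omega| hD.
have hK : #|[set: Omega]| = #|Omega| by rewrite cardsT.
have hout : forall (y z : Omega -> R) k, k \notin [set: Omega] -> y k = z k.
  by move=> y z k; rewrite inE.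
move: hlam => /andP [hl0 hl1].
case: (lerP t1 t2) => ht.
  have := defect hK hD (introT andP (conj hl0 hl1)) hff c1 c2.
  have hyz : forall k, t1 * u k + x k <= t2 * u k + x k.
    by move=> k; have := hu k; nra.
  move=> /(_ hyz (hout _ _)).
  rewrite (@F_ext _ _ f (fun k => lam * (t1 * u k + x k) + (1 - lam) * (t2 * u k + x k))
     (fun k => (lam * t1 + (1 - lam) * t2) * u k + x k)); last by move=> k; ring.
  lra.
have hl' : 0 <= 1 - lam <= 1 by apply/andP; split; lra.
have := defect hK hD hl' hff c2 c1.
have hyz : forall k, t2 * u k + x k <= t1 * u k + x k.
  by move=> k; have := hu k; nra.
move=> /(_ hyz (hout _ _)).
rewrite (@F_ext _ _ f (fun k => (1 - lam) * (t2 * u k + x k) + (1 - (1 - lam)) * (t1 * u k + x k))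
   (fun k => (lam * t1 + (1 - lam) * t2) * u k + x k)); last by move=> k; ring.
lra.
Qed.
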